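(* Let $p$ be a prime and $S\subseteq\mathbb{F}_p\setminus\{0\}$ a symmetric set such that $G=\Gamma(\mathbb{F}_p,S)$ is self-complementary (isomorphic to its complement). Then $\Theta_{\mathrm{lin}}(G)=\sqrt p$.
   Context: For a symmetric set $S\subseteq\mathbb{F}_p\setminus\{0\}$ ($S=-S$), the Cayley graph $\Gamma(\mathbb{F}_p,S)$ has vertex set $\mathbb{F}_p$, with $u\sim v$ iff $u-v\in S$. $G^k$ is the $k$-fold strong product (distinct vertices adjacent iff in each coordinate they are equal or adjacent). $\alpha_{\mathrm{lin}}(G^k)$ is the largest size of an independent set of $G^k$ that is a linear subspace of $\mathbb{F}_p^k$, and $\Theta_{\mathrm{lin}}(G)=\sup_k\alpha_{\mathrm{lin}}(G^k)^{1/k}$. *)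

(* Defs.v *)
From HB Require Import structures.
From mathcomp Require Import all_boot all_order all_fingroup all_algebra.
From mathcomp Require Import all_classical all_reals all_analysis.
Set Implicit Arguments. Unset Strict Implicit. Unset Printing Implicit Defensive.
Import Order.TTheory GRing.Theory Num.Theory.
Local Open Scope ring_scope.
Local Open Scope classical_set_scope.

Section Defs.
Variable p : nat.

Definition symmetric_conn (S : {set 'F_p}) : Prop :=
  0 \notin S /\ forall x : 'F_p, x \in S -> - x \in S.

Definition cay_adj (S : {set 'F_p}) (u v : 'F_p) : bool := (u - v) \in S.

Definition cay_cadj (S : {set 'F_p}) (u v : 'F_p) : bool :=
  (u != v) && ((u - v) \notin S).

Definition self_complementary (S : {set 'F_p}) : Prop :=
  exists f : {perm 'F_p}, forall u v : 'F_p,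
    cay_adj S u v = cay_cadj S (f u) (f v).

Definition strong_adj (S : {set 'F_p}) (k : nat) (u v : 'rV['F_p]_k) : bool :=
  (u != v) && [forall i : 'I_k, (u ord0 i == v ord0 i) || cay_adj S (u ord0 i) (v ord0 i)].

Definition is_subspace (k : nat) (V : {set 'rV['F_p]_k}) : bool :=
  (0 \in V) && [forall a : 'F_p, forall u, forall v,
     (u \in V) ==> (v \in V) ==> (a *: u + v \in V)].

Definition is_independent (S : {set 'F_p}) (k : nat) (V : {set 'rV['F_p]_k}) : bool :=
  [forall u in V, forall v in V, ~~ strong_adj S u v].

Definition alpha_lin (S : {set 'F_p}) (k : nat) : nat :=
  \max_(V : {set 'rV['F_p]_k} | is_subspace V && is_independent S V) #|V|.

Definition Theta_lin (R : realType) (S : {set 'F_p}) : R :=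
  sup [set x : R | exists k : nat, (0 < k)%N /\
         x = ((alpha_lin S k)%:R `^ (k%:R)^-1)%R].
End Defs.

(* Main.v *)
Require Import Defs.
From HB Require Import structures.
From mathcomp Require Import all_boot all_order all_fingroup all_algebra all_solvable all_field.
From mathcomp Require Import mpoly.
From mathcomp Require Import all_classical all_reals all_analysis.
From mathcomp Require Import zify.
From Stdlib Require Import Lia.
Import Order.TTheory GRing.Theory Num.Theory.
Set Implicit Arguments. Unset Strict Implicit. Unset Printing Implicit Defensive.
Local Open Scope ring_scope.

Section PowSum.
Variable p : nat.
Hypothesis pr : prime p.

Lemma Fp_elem (x : 'F_p) : x = (val x)%:R.
Proof.
apply: val_inj; rewrite /= val_Fp_nat // modn_small //.
by have := ltn_ord x; rewrite [X in (_ < X)%N -> _]Fp_cast.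
Qed.

Lemma powsum0 e : (e < p.-1)%N -> \sum_(t : 'F_p) t ^+ e = 0.
Proof.
move=> he.
case: e he => [|e] he.
  by rewrite (eq_bigr (fun _ => 1)) ?sumr_const ?card_Fp // pchar_Fp_0 // => t _; rewrite expr0.
have [c /andP[c0 cP]] : exists c : 'F_p, (c != 0) && (c ^+ e.+1 != 1).
  apply/existsP; apply: contraT; rewrite negb_exists => /forallP allr.
  pose q : {poly 'F_p} := 'X^(e.+1) - 1.
  have q0 : q != 0 by rewrite /q -size_poly_eq0 size_XnsubC.
  have := @max_poly_roots _ q (enum [pred x : 'F_p | x != 0]) q0.
  have -> : all (root q) (enum [pred x : 'F_p | x != 0]).
    apply/allP => x; rewrite mem_enum inE => x0; rewrite /root /q !hornerE.
    by move: (allr x); rewrite x0 /= negbK => /eqP ->; rewrite subrr.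
  rewrite enum_uniq => /(_ isT isT).
  rewrite /q size_XnsubC // -cardE cardC1 card_Fp //.
  by move: he; case: p pr => [|[|p']] //= _ H1 H2; move: (leq_ltn_trans H1 H2); rewrite ltnn.
have : \sum_(t : 'F_p) t ^+ e.+1 = c ^+ e.+1 * \sum_(t : 'F_p) t ^+ e.+1.
  rewrite mulr_sumr (reindex_inj (mulfI c0)) /=.
  by apply: eq_bigr => t _; rewrite exprMn.
move/eqP; rewrite -subr_eq0 -{1}(mul1r (\sum_t _)) -mulrBl mulf_eq0 subr_eq0 eq_sym.
by rewrite (negbTE cP) => /eqP.
Qed.

Lemma mpoly_sum0 d (P : {mpoly 'F_p[d]}) : (msize P <= d * p.-1)%N ->
  \sum_(f : {ffun 'I_d -> 'F_p}) P.@[f] = 0.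
Proof.
move=> hP.
under eq_bigr do rewrite mevalE.
rewrite exchange_big /=; apply: big1_seq => m /andP[_ mP].
rewrite -mulr_sumr -(bigA_distr_bigA (fun i (t : 'F_p) => t ^+ m i)) /=.
have [i hi] : exists i, (m i < p.-1)%N.
  apply/existsP; apply: contraT; rewrite negb_exists => /forallP H.
  have := msize_mdeg_lt mP; rewrite mdegE => H2.
  have : (d * p.-1 <= \sum_i m i)%N.
    rewrite -[X in (X * _)%N]card_ord -sum_nat_const; apply: leq_sum => j _.
    by move: (H j); rewrite -leqNgt.
  by move=> H3; move: (leq_ltn_trans H3 (leq_trans H2 hP)); rewrite ltnn.
by rewrite (bigD1 i) //= powsum0 // mul0r mulr0.
Qed.
End PowSum.
Section MSize.
Variables (R : idomainType) (n : nat).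

Lemma msizeM_le' (P Q : {mpoly R[n]}) : (msize (P * Q) <= (msize P + msize Q).-1)%N.
Proof.
have [->|P0] := eqVneq P 0; first by rewrite mul0r msize0.
have [->|Q0] := eqVneq Q 0; first by rewrite mulr0 msize0.
by rewrite msizeM.
Qed.

Lemma msize_prod_le (I : Type) (r : seq I) (Pr : pred I) (F : I -> {mpoly R[n]}) (a : I -> nat) :
  (forall i, Pr i -> msize (F i) <= (a i).+1)%N ->
  (msize (\prod_(i <- r | Pr i) F i) <= (\sum_(i <- r | Pr i) a i).+1)%N.
Proof.
move=> H; elim: r => [|x r IH]; first by rewrite !big_nil msize1.
rewrite !big_cons; case: ifP => // Px.
apply: leq_trans (msizeM_le' _ _) _.
have := leq_add (H x Px) IH; rewrite addSn addnS /= => H2.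
by rewrite -subn1 leq_subLR add1n.
Qed.

Lemma msize_lin (c : 'I_n -> R) (b : R) :
  (msize (\sum_(j < n) c j *: 'X_j - b%:MP) <= 2)%N.
Proof.
apply: leq_trans (msizeD_le _ _) _; rewrite geq_max msizeN.
rewrite msizeC (leq_trans (leq_b1 _)) // andbT.
apply: leq_trans (msize_sum _ _ _) _; apply/bigmax_leqP => j _.
by apply: leq_trans (msizeZ_le _ _) _; rewrite msizeX mdeg1.
Qed.
End MSize.
Section Param.
Variables (F : finFieldType) (k : nat) (V : {set 'rV[F]_k}).
Hypothesis V0 : 0 \in V.
Hypothesis VC : forall (a : F) u v, u \in V -> v \in V -> a *: u + v \in V.

Lemma param : exists d (B : 'M[F]_(d,k)), row_free B /\
  forall v, (v \in V) = [exists x : 'rV_d, v == x *m B].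
Proof.
pose A := \matrix_(i < #|V|) (enum_val i : 'rV_k).
have rowA i : row i A = enum_val i by rewrite rowK.
have combV (w : 'rV_#|V|) : w *m A \in V.
  rewrite mulmx_sum_row; apply: (big_ind (fun u => u \in V)) => //.
    by move=> u v Hu Hv; rewrite -(scale1r u) VC.
  move=> i _; rewrite -[_ *: _]addr0 VC // rowA.
  by apply: (@enum_valP _ (mem V)).
exists (\rank A), (row_base A); split; first exact: row_base_free.
move=> v; apply/idP/existsP => [vV | [x /eqP ->]].
  have : (v <= row_base A)%MS.
    rewrite eq_row_base -(enum_rankK_in vV vV) -rowA; exact: row_sub.
  by case/submxP => x ->; exists x.
have : (x *m row_base A <= A)%MS by rewrite -(eq_row_base A) submxMl.
by case/submxP => w ->.
Qed.
End Param.

Section Upper.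
Variables (p : nat) (S : {set 'F_p}).
Hypothesis pr : prime p.
Let N := [set x : 'F_p | (x != 0) && (x \notin S)].
Hypothesis hN : (2 * #|N| <= p.-1)%N.

Lemma indep_coord k (V : {set 'rV['F_p]_k}) : 0 \in V -> is_independent S V ->
  forall v, v \in V -> v != 0 -> exists i, v 0 i \in N.
Proof.
move=> V0 /forallP HI v vV v0.
move: (HI v); rewrite vV /= => /forallP /(_ 0); rewrite V0 /= /strong_adj v0 /=.
rewrite negb_forall => /existsP [i]; rewrite mxE /cay_adj subr0 negb_or => Hi.
by exists i; rewrite inE.
Qed.

Lemma upper_dim k (V : {set 'rV['F_p]_k}) : is_subspace V -> is_independent S V ->
  exists d, #|V| = (p ^ d)%N /\ (2 * d <= k)%N.
Proof.
case/andP => V0 /forallP VC' HI.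
have VC (a : 'F_p) u v : u \in V -> v \in V -> a *: u + v \in V.
  by move=> uV vV; move: (VC' a) => /forallP /(_ u) /forallP /(_ v); rewrite uV vV.
have [d [B [fB HV]]] := param V0 VC.
have cardV : #|V| = (p ^ d)%N.
  have -> : V = [set x *m B | x : 'rV_d].
    apply/setP => v; rewrite HV; apply/existsP/imsetP => [[x /eqP ->]|[x _ ->]]; by exists x.
  by rewrite card_imset ?card_mx ?card_Fp ?mul1n //; exact: row_free_inj.
exists d; split => //.
rewrite leqNgt; apply/negP => hk.
have p1 : (0 < p.-1)%N by move: (prime_gt1 pr); case: p => [|[|]].
pose phi (t : 'F_p) := \prod_(n in N) (t - n).
pose P : {mpoly 'F_p[d]} :=
  \prod_(i < k) \prod_(n in N) ((\sum_(j < d) B j i *: 'X_j) - n%:MP).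
have sP : (msize P <= d * p.-1)%N.
  apply: leq_trans (@msize_prod_le _ _ _ _ _ _ (fun _ => #|N|) _) _.
    move=> i _; apply: leq_trans (@msize_prod_le _ _ _ _ _ _ (fun _ => 1%N) _) _.
      by move=> n _; exact: msize_lin.
    by rewrite -big_enum sum1_size /= cardE.
  rewrite sum_nat_const card_ord.
  nia.
have := mpoly_sum0 pr sP.
have evP (f : {ffun 'I_d -> 'F_p}) :
    P.@[f] = \prod_(i < k) phi (((\row_j f j) *m B) 0 i).
  rewrite /P (big_morph _ (mevalM f) (meval1 f)); apply: eq_bigr => i _.
  rewrite (big_morph _ (mevalM f) (meval1 f)); apply: eq_bigr => n _.
  rewrite mevalB mevalC raddf_sum /= mxE; congr (_ - _); apply: eq_bigr => j _.
  by rewrite mevalZ mevalXU mxE mulrC.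
under eq_bigr do rewrite evP.
move/eqP; apply/negP; rewrite (bigD1 [ffun=> 0]) //.
set T2 := (\sum_(f | f != _) _).
have -> : T2 = 0.
  rewrite /T2; apply: big1 => f f0.
  have x0 : \row_j f j != 0.
    apply: contra f0 => /eqP H; apply/eqP/ffunP => j; rewrite ffunE.
    by move/rowP: H => /(_ j); rewrite !mxE.
  have v0 : (\row_j f j) *m B != 0.
    by apply: contra x0 => /eqP H; apply/eqP; apply: (row_free_inj fB); rewrite H mul0mx.
  have vV : (\row_j f j) *m B \in V by rewrite HV; apply/existsP; exists (\row_j f j).
  have [i Hi] := indep_coord V0 HI vV v0.
  rewrite (bigD1 i) //= /phi (bigD1 ((\row_j f j *m B) 0 i)) //=.
  by rewrite subrr !mul0r.
rewrite /= addr0.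
have -> : (\row_j ([ffun=> 0] : {ffun 'I_d -> 'F_p}) j) = 0.
  by apply/rowP => j; rewrite !mxE ffunE.
rewrite mul0mx prodf_seq_neq0; apply/allP => i _ /=.
rewrite mxE /phi prodf_seq_neq0; apply/allP => n _; apply/implyP; rewrite inE => /andP[n0 _].
by rewrite /= sub0r oppr_eq0.
Qed.
End Upper.


Section Mult.
Variables (p : nat) (S : {set 'F_p}).
Hypothesis pr : prime p.
Hypothesis S0 : 0 \notin S.
Variable f : {perm 'F_p}.
Hypothesis Hf : forall u v, cay_adj S u v = cay_cadj S (f u) (f v).

Lemma Hf' a c : cay_adj S (f a) (f c) = cay_cadj S a c.
Proof.
rewrite /cay_cadj; have [->|ac] := eqVneq a c; first by rewrite /cay_adj subrr (negbTE S0).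
rewrite /=; have := Hf a c; rewrite /cay_cadj (inj_eq perm_inj) ac /= /cay_adj => ->.
by rewrite negbK.
Qed.

Definition tr (b : 'F_p) : {perm 'F_p} := perm (addIr b).
Lemma trE b x : tr b x = x + b. Proof. by rewrite permE. Qed.

Definition Cset := [set tr b | b : 'F_p].
Definition Aset := [set g : {perm 'F_p} |
  [forall u, forall v, cay_adj S (g u) (g v) == cay_adj S u v]].

Lemma AsetP (g : {perm 'F_p}) : reflect (forall u v, cay_adj S (g u) (g v) = cay_adj S u v) (g \in Aset).
Proof.
rewrite inE; apply: (iffP forallP) => [H u v|H u]; last by apply/forallP => v; rewrite H.
by move/forallP: (H u) => /(_ v) /eqP.
Qed.

Lemma Cgroup : group_set Cset.
Proof.
apply/group_setP; split.
  apply/imsetP; exists 0 => //; apply/permP => x; rewrite trE perm1 addr0.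
  by [].
move=> x y /imsetP[a _ ->] /imsetP[b _ ->]; apply/imsetP; exists (a + b) => //.
by apply/permP => z; rewrite permM !trE addrA.
Qed.

Lemma Agroup : group_set Aset.
Proof.
apply/group_setP; split; first by apply/AsetP => u v; rewrite !perm1.
move=> x y /AsetP Hx /AsetP Hy; apply/AsetP => u v.
by rewrite !permM Hy Hx.
Qed.

Definition CG := Group Cgroup.
Definition AG := Group Agroup.

Lemma cardC : #|CG| = p.
Proof.
rewrite /= card_imset ?card_Fp //.
by move=> a b /permP /(_ 0); rewrite !trE !add0r.
Qed.

Lemma CsubA : CG \subset AG.
Proof.
apply/fintype.subsetP => x /imsetP[b _ ->]; apply/AsetP => u v.
by rewrite !trE /cay_adj opprD addrACA subrr addr0.
Qed.

Lemma CfsubA : (CG :^ f \subset AG)%g.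
Proof.
apply/fintype.subsetP => y /imsetP[z /imsetP[b _ ->] ->]; apply/AsetP => u v.
rewrite /conjg !permM.
rewrite -[in RHS](permKV f u) -[in RHS](permKV f v) !Hf' /cay_cadj !trE opprD addrACA subrr addr0.
by rewrite (inj_eq (addIr b)).
Qed.


Lemma logn_fact_p : logn p p`! = 1%N.
Proof.
have p1 := prime_gt1 pr.
move: pr p1 (Wilson p1); case: p => [|p'] // pr' _ W.
rewrite factS lognM ?fact_gt0 // logn_prime // eqxx.
have -> : logn p'.+1 p'`! = 0%N.
  apply/eqP; rewrite -leqn0 leqNgt logn_gt0 mem_primes pr' fact_gt0 /=.
  apply/negP => H; move: W; rewrite pr' /= -[(p'`!).+1]addn1 (dvdn_addr 1 H) dvdn1 => /esym /eqP H1.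
  by rewrite H1 in pr'.
by rewrite addn0.
Qed.

Lemma cardA_p : ((#|AG|)`_p)%N = p.
Proof.
apply/eqP; rewrite eqn_dvd; apply/andP; split.
  have H : (#|AG| %| p`!)%N.
    have := cardSg (finset.subsetT AG); rewrite cardsT.
    have -> : #|{perm 'F_p}| = p`!.
      have := card_perm [set: 'F_p]; rewrite cardsT card_Fp // => <-; apply: eq_card => s.
      rewrite inE; symmetry; apply/idP; rewrite unfold_in; apply/fintype.subsetP => z _; by rewrite inE.
    by [].
  have := partn_dvd p (fact_gt0 p) H.
  by rewrite [X in (_ %| X)%N]p_part logn_fact_p expn1.
have H : (p %| #|AG|)%N by rewrite -{1}cardC cardSg // CsubA.
have := partn_dvd p (cardG_gt0 AG) H.
by rewrite part_pnat_id // pnat_id.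
Qed.

Lemma multiplier : exists a : 'F_p, forall s, s \in S -> (s * a != 0) && (s * a \notin S).
Proof.
have sylC : (p.-Sylow(AG) CG)%g by rewrite pHallE CsubA cardA_p cardC eqxx.
have sylCf : (p.-Sylow(AG) (CG :^ f)%G)%g.
  by rewrite pHallE CfsubA /= cardJg cardA_p cardC eqxx.
have [x xA Ex] := Sylow_trans sylC sylCf.
pose h := (f * x^-1)%g.
have hC : (CG :^ h)%g = CG.
  by rewrite /h conjsgM Ex conjsgK.
have xiA : (x^-1)%g \in AG by rewrite groupV.
have Hh u v : cay_adj S u v = cay_cadj S (h u) (h v).
  rewrite Hf /h !permM /cay_cadj !(inj_eq perm_inj); congr (_ && ~~ _).
  by have /AsetP H := xiA; have := H (f u) (f v); rewrite /cay_adj => ->.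
have : (tr 1%R ^ h)%g \in CG.
  by rewrite -hC memJ_conjg /=; apply: imset_f.
case/imsetP => a _ Ha.
clearbody h.
have hS w : h (w + 1) = h w + a.
  have := congr1 (fun g : {perm 'F_p} => g (h w)) Ha.
  by rewrite /conjg !permM permK !trE.
have hE w : h w = h 0 + w * a.
  rewrite (Fp_elem pr w); elim: (val w) => [|n IH]; first by rewrite mul0r addr0.
  by rewrite mulrSr hS IH mulrDl mul1r addrA.
exists a => s sS.
have := Hh s 0; rewrite /cay_adj subr0 sS /cay_cadj hE (hE 0) mul0r addr0.
rewrite [h 0 + s * a - h 0]addrAC subrr add0r -[X in _ != X]addr0 (inj_eq (addrI _)).
by move=> /esym.
Qed.
End Mult.
Section Count.
Variables (p : nat) (S : {set 'F_p}).
Hypothesis pr : prime p.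
Hypothesis S0 : 0 \notin S.

Lemma card_diff (c : 'F_p) : #|[set w : 'F_p | c - w \in S]| = #|S|.
Proof.
have -> : [set w | c - w \in S] = (fun s => c - s) @: S.
  apply/setP => w; rewrite inE; apply/idP/imsetP => [H|[s sS ->]].
    by exists (c - w) => //; rewrite opprB addrC subrK.
  by rewrite opprB addrC subrK.
by rewrite card_imset // => x y /addrI /oppr_inj.
Qed.

Lemma card_half : self_complementary S -> (#|S| + #|S|).+1 = p.
Proof.
case=> f Hf.
set c := f 0.
have e1 : #|S| = #|[set w | cay_cadj S c w]|.
  rewrite -(card_diff 0) -[RHS](card_preimset _ (@perm_inj _ f)).
  by apply: eq_card => v; rewrite !inE -/(cay_adj S 0 v) Hf.
have e2 : [set w | c - w \notin S] = c |: [set w | cay_cadj S c w].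
  apply/setP => w; rewrite !inE /cay_cadj.
  by case: (eqVneq w c) => [->|/=]; rewrite ?subrr ?S0 ?eqxx // eq_sym => ->.
have := cardsC [set w | c - w \in S].
rewrite card_diff card_Fp //.
have -> : ~: [set w | c - w \in S] = [set w | c - w \notin S] by apply/setP => w; rewrite !inE.
rewrite e2 cardsU1 inE /cay_cadj eqxx /= -e1 => H; apply: etrans H.
by rewrite add1n addnS.
Qed.

Lemma card_N : self_complementary S ->
  #|[set x : 'F_p | (x != 0) && (x \notin S)]| = #|S|.
Proof.
move=> /card_half H.
have e : [set x | x \notin S] = 0 |: [set x : 'F_p | (x != 0) && (x \notin S)].
  apply/setP => x; rewrite !inE; case: (eqVneq x 0) => [->|] //=.
have := cardsC S; rewrite card_Fp //.
have -> : ~: S = [set x | x \notin S] by apply/setP => x; rewrite !inE.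
rewrite e cardsU1 inE eqxx /= => H2; move: (etrans H2 (esym H)).
by rewrite add1n addnS => /eqP; rewrite eqSS eqn_add2l => /eqP.
Qed.
End Count.

Section Alpha.
Variables (p : nat) (S : {set 'F_p}).
Hypothesis pr : prime p.
Hypothesis hS : symmetric_conn S.
Hypothesis sc : self_complementary S.

Lemma S0 : 0 \notin S. Proof. by case: hS. Qed.

Lemma alpha_upper k : (alpha_lin S k ^ 2 <= p ^ k)%N.
Proof.
have hN : (2 * #|[set x : 'F_p | (x != 0%R) && (x \notin S)]| <= p.-1)%N.
  rewrite card_N // ?S0 //; have H := card_half pr S0 sc.
  have -> : p.-1 = (#|S| + #|S|)%N by rewrite -[in LHS]H. 
  by rewrite mul2n addnn.
rewrite /alpha_lin; apply: (big_ind (fun x => x ^ 2 <= p ^ k)%N).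
- by rewrite exp0n.
- by move=> x y Hx Hy; rewrite /maxn; case: ifP.
move=> V /andP[sV iV]; have [d [-> hd]] := upper_dim pr hN sV iV.
by rewrite -expnM leq_pexp2l ?prime_gt0 // mulnC.
Qed.

Lemma alpha_lower : (p <= alpha_lin S 2)%N.
Proof.
have [f Hf] := sc.
have [a Ha] := multiplier pr S0 Hf.
pose w : 'rV['F_p]_2 := \row_j (if j == ord0 then 1 else a).
pose V := [set x *: w | x : 'F_p].
have wE x i : (x *: w) 0 i = x * (if i == ord0 then 1 else a) by rewrite !mxE.
have cV : #|V| = p.
  rewrite card_imset ?card_Fp // => x y /rowP /(_ ord0).
  by rewrite !mxE eqxx !mulr1.
rewrite -{1}cV /alpha_lin; apply: (@leq_bigmax_cond _ _ (fun V : {set 'rV['F_p]_2} => #|V|) V).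
apply/andP; split.
  apply/andP; split; first by apply/imsetP; exists 0; rewrite ?scale0r.
  apply/forallP => c; apply/forallP => u; apply/forallP => v.
  apply/implyP => /imsetP[x _ ->]; apply/implyP => /imsetP[y _ ->].
  by apply/imsetP; exists (c * x + y); rewrite // scalerDl scalerA.
apply/forallP => u; apply/implyP => /imsetP[x _ ->].
apply/forallP => v; apply/implyP => /imsetP[y _ ->].
rewrite /strong_adj negb_and -implybE; apply/implyP => neq.
rewrite negb_forall; apply/existsP.
have xy : x != y by apply: contra neq => /eqP ->.
case: (boolP (x - y \in S)) => xyS; last first.
  by exists ord0; rewrite !wE eqxx !mulr1 /cay_adj negb_or xyS andbT.
exists ord_max; rewrite !wE /= /cay_adj -mulrBl.
have := Ha _ xyS; case/andP => H1 H2.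
by rewrite negb_or H2 andbT -subr_eq0 -mulrBl.
Qed.
End Alpha.

Lemma powR_bound (R : realType) (p a k : nat) : (0 < k)%N -> (a ^ 2 <= p ^ k)%N ->
  (a%:R : R) `^ (k%:R)^-1 <= Num.sqrt (p%:R).
Proof.
move=> k0 hak.
have k2 : (0 < 2 * k)%N by rewrite muln_gt0.
rewrite -(ler_pXn2r k2) ?nnegrE ?powR_ge0 ?sqrtr_ge0 //.
rewrite -powR_mulrn ?powR_ge0 // -powRrM.
have -> : (k%:R : R)^-1 * (2 * k)%:R = 2%:R.
  by rewrite natrM mulrCA mulVf ?mulr1 // pnatr_eq0 -lt0n.
rewrite powR_mulrn // exprM sqr_sqrtr // -!natrX ler_nat.
by [].
Qed.

Unset Implicit Arguments.
Unset Strict Implicit.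

Theorem mainTheorem6 (R : realType) (p : nat) (S : {set 'F_p}) :
  prime p -> symmetric_conn S -> self_complementary S ->
  Theta_lin R S = Num.sqrt (p%:R : R).
Proof.
move=> pr hS sc.
have a2 : alpha_lin S 2 = p.
  apply/eqP; rewrite eqn_leq alpha_lower // andbT.
  by rewrite -(@leq_exp2r _ _ 2) // alpha_upper.
rewrite /Theta_lin; set X := (X in sup X).
have sX : X (Num.sqrt (p%:R)).
  exists 2%N; split => //; rewrite a2 powR12_sqrt //.
have ub : ubound X (Num.sqrt (p%:R)).
  by move=> x [k [k0 ->]]; apply: powR_bound => //; exact: alpha_upper.
apply/le_anti/andP; split.
  by apply: ge_sup => //; exists (Num.sqrt p%:R).
by apply: ub_le_sup => //; exists (Num.sqrt p%:R).
Qed.
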